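(* Let $V$ be a finite set and let $G$ be the group with presentation $\langle V \mid r_e,\ e\in E\rangle$, where $E$ is a finite index set and each relator has the form $r_e=\lambda_e p_e\lambda_e^{-1}q_e^{-1}$ with $\lambda_e,p_e,q_e\in V$. Assume the vertex link $L$ (defined in the context) has girth at least $4$ (no loops, no multiple edges, no triangles), and that the descending link $L^+$ and the ascending link $L^-$ are trees. Then for any pair of distinct letters $a,b\in V$, the vertex rim $\mathrm{vrim}(a,b)$ of the fan $\mathrm{Fan}(a,b)$ is a freely reduced word in the letters $V^{\pm1}$, and the edge rim $\mathrm{erim}(a,b)$ is a freely reduced word in the letters $\{x_e\}_{e\in E}^{\pm1}$.
   Context: Let $P$ be the presentation $2$-complex: one vertex, one oriented loop per generator, and for each relator $r_e$ one unit square glued along the word $r_e$. In the square of $r_e$, starting at the corner $B$ and reading $\lambda_e p_e\lambda_e^{-1}q_e^{-1}$, the edges are: $\lambda_e$ from $B$ to a corner $Q$, $p_e$ from $Q$ to a corner $T$, $\lambda_e$ from a corner $R$ to $T$, and $q_e$ from $B$ to $R$. Call $T$ the top corner (its two incoming edges, labeled $p_e$ and $\lambda_e$, are the top edges) and $B$ the bottom corner. The vertex link $L$ is the graph with vertex set $\{v^+,v^-: v\in V\}$ and, for each relator $e$, four edges: $\{p_e^+,\lambda_e^+\}$ (corner $T$), $\{\lambda_e^-,q_e^-\}$ (corner $B$), $\{\lambda_e^+,p_e^-\}$ (corner $Q$), $\{q_e^+,\lambda_e^-\}$ (corner $R$). The descending link $L^+$ is the full subgraph on $\{v^+\}$ and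 the ascending link $L^-$ the full subgraph on $\{v^-\}$. For $e\in E$ put $x_e=q_e^{-1}\lambda_e$ (a formal letter, also an element of $G$). Fan $\mathrm{Fan}(a,b)$ for distinct $a,b\in V$: let $a^+=v_0^+,v_1^+,\dots,v_k^+=b^+$ be the unique simple path in the tree $L^+$. For $1\le i\le k$ let $C_i$ be a copy of the square of the unique relator whose top edges are labeled $v_{i-1}$ and $v_i$. $\mathrm{Fan}(a,b)$ is obtained by identifying, for $1\le i<k$, the top edge of $C_i$ labeled $v_i$ with the top edge of $C_{i+1}$ labeled $v_i$. For each $i$, the bottom boundary path of $C_i$ from the initial vertex of its top edge labeled $v_{i-1}$ to the initial vertex of its top edge labeled $v_i$ reads a two-letter word, which is either $q_e^{-1}\lambda_e$ or $\lambda_e^{-1}q_e$ for the relator $e$ of $C_i$. The vertex rim $\mathrm{vrim}(a,b)$ is the concatenation of these two-letter words for $i=1,\dots,k$, and the edge rim $\mathrm{erim}(a,b)$ is the word obtained by replacing each $q_e^{-1}\lambda_e$ by $x_e$ and each $\lambda_e^{-1}q_e$ by $x_e^{-1}$. *)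

(* Defs.v *)
From mathcomp Require Import all_boot.
Set Implicit Arguments. Unset Strict Implicit. Unset Printing Implicit Defensive.

Section Link.
Variables (V E : finType) (lam p q : E -> V).

(* Vertices of the link L: (v, true) = v^+, (v, false) = v^-. *)
Definition lvert := (V * bool)%type.

(* The four edges of L contributed by relator e, indexed by 'I_4:
   0: {p_e^+, lam_e^+} (corner T)   1: {lam_e^-, q_e^-} (corner B)
   2: {lam_e^+, p_e^-} (corner Q)   3: {q_e^+, lam_e^-} (corner R) *)
Definition linkEdge (f : E * 'I_4) : lvert * lvert :=
  let e := f.1 in
  match val f.2 with
  | 0 => ((p e, true), (lam e, true))
  | 1 => ((lam e, false), (q e, false))
  | 2 => ((lam e, true), (p e, false))
  | _ => ((q e, true), (lam e, false))
  end.

Definition same_ends (x y : lvert * lvert) : bool :=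
  ((x.1 == y.1) && (x.2 == y.2)) || ((x.1 == y.2) && (x.2 == y.1)).

Definition linkAdj (x y : lvert) : bool :=
  [exists f : E * 'I_4, same_ends (linkEdge f) (x, y)].

Definition link_girth_ge4 : Prop :=
  [/\ (forall f, (linkEdge f).1 != (linkEdge f).2),
      (forall f g, same_ends (linkEdge f) (linkEdge g) -> f = g) &
      (forall x y z, linkAdj x y -> linkAdj y z -> linkAdj z x -> False)].

Definition Lplus_adj : rel V := fun u v => linkAdj (u, true) (v, true).
Definition Lminus_adj : rel V := fun u v => linkAdj (u, false) (v, false).

Definition top_labels (e : E) (u v : V) : bool :=
  ((p e == u) && (lam e == v)) || ((lam e == u) && (p e == v)).

(* Data of Fan(a,b): vs = [v_1; ...; v_k] so that a :: vs is the simple path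
   a = v_0, ..., v_k = b in L^+, and es = [e_1; ...; e_k] where C_i is a copy
   of the square of relator e_i, whose top edges are labelled v_{i-1}, v_i. *)
Definition fan_steps (a : V) (vs : seq V) (es : seq E) : seq ((V * V) * E) :=
  zip (zip (a :: vs) vs) es.

Definition is_fan_data (a b : V) (vs : seq V) (es : seq E) : Prop :=
  [/\ last a vs = b, uniq (a :: vs), path Lplus_adj a vs,
      size es = size vs &
      all (fun t => top_labels t.2 t.1.1 t.1.2) (fan_steps a vs es)].

(* letters x^{+1} = (x, true), x^{-1} = (x, false) *)
(* bottom boundary word of C_i from the initial vertex of the top edge
   labelled v_{i-1} to that of the top edge labelled v_i:
   q_e^{-1} lam_e if v_{i-1} = lam_e (and v_i = p_e),
   lam_e^{-1} q_e if v_{i-1} = p_e (and v_i = lam_e). *)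
Definition vrim_piece (t : (V * V) * E) : seq (V * bool) :=
  let e := t.2 in
  if t.1.1 == lam e then [:: (q e, false); (lam e, true)]
  else [:: (lam e, false); (q e, true)].

Definition erim_piece (t : (V * V) * E) : E * bool :=
  let e := t.2 in (e, t.1.1 == lam e).

Definition vrim (a : V) (vs : seq V) (es : seq E) : seq (V * bool) :=
  flatten (map vrim_piece (fan_steps a vs es)).

Definition erim (a : V) (vs : seq V) (es : seq E) : seq (E * bool) :=
  map erim_piece (fan_steps a vs es).

End Link.

Definition is_tree (T : finType) (adj : rel T) : Prop :=
  (forall u v, connect adj u v) /\
  (forall c : seq T, 3 <= size c -> uniq c -> ~~ cycle adj c).

Definition not_inverse (T : eqType) (x y : T * bool) : bool :=
  (x.1 != y.1) || (x.2 == y.2).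

Definition freely_reduced (T : eqType) (w : seq (T * bool)) : bool :=
  match w with
  | [::] => true
  | x :: w' => path (@not_inverse T) x w'
  end.

(* Main.v *)
Require Import Defs.
From mathcomp Require Import all_boot.

Set Implicit Arguments. Unset Strict Implicit.
Section S.
Variables (V E : finType) (lam p q : E -> V).

Definition vfirst (t : (V * V) * E) : V * bool :=
  if t.1.1 == lam t.2 then (q t.2, false) else (lam t.2, false).
Definition vsecond (t : (V * V) * E) : V * bool :=
  if t.1.1 == lam t.2 then (lam t.2, true) else (q t.2, true).

Lemma vpiece_eq t : vrim_piece lam q t = [:: vfirst t; vsecond t].
Proof. by rewrite /vrim_piece /vfirst /vsecond; case: ifP. Qed.

Lemma vrim_cons a v vs e es :
  vrim lam q a (v :: vs) (e :: es) =
  vfirst ((a, v), e) :: vsecond ((a, v), e) :: vrim lam q v vs es.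
Proof. by rewrite /vrim /= vpiece_eq. Qed.

Lemma ord_neq (i j : 'I_4) (e1 e2 : E) : val i != val j -> (e1, i) <> (e2, j).
Proof. by move=> /eqP H [_ Hij]; apply: H; rewrite Hij. Qed.

Lemma step_v (H2 : forall f g, same_ends (linkEdge lam p q f) (linkEdge lam p q g) -> f = g)
  e1 e2 u v w : top_labels lam p e1 u v -> top_labels lam p e2 v w ->
  u != v -> v != w -> u != w ->
  not_inverse (vsecond ((u, v), e1)) (vfirst ((v, w), e2)).
Proof.
move=> T1 T2 uv vw uw; rewrite /vsecond /vfirst /=.
case/orP: T1 => [/andP[/eqP Pu /eqP Lv] | /andP[/eqP Lu /eqP Pv]];
case/orP: T2 => [/andP[/eqP Pv2 /eqP Lw] | /andP[/eqP Lv2 /eqP Pw]].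
- rewrite Lv (negbTE uv) Lw (negbTE vw).
  rewrite /not_inverse /= orbF; apply/eqP => Hq.
  have := H2 (e1, @Ordinal 4 3 isT) (e2, @Ordinal 4 2 isT).
  rewrite /same_ends /= Hq Lv Pv2 Lw !eqxx /= => /(_ isT).
  exact: ord_neq.
- rewrite Lv (negbTE uv) Lv2 eqxx /not_inverse /= orbF; apply/eqP => Hq.
  have := H2 (e1, @Ordinal 4 1 isT) (e2, @Ordinal 4 1 isT).
  rewrite /same_ends /= Hq Lv Lv2 !eqxx /= => /(_ isT) [E12].
  by move: uw; rewrite -Pu -Pw E12 eqxx.
- rewrite Lu eqxx Lw (negbTE vw).
  by rewrite /not_inverse /= uw.
- rewrite Lu eqxx Lv2 eqxx /not_inverse /= orbF; apply/eqP => Hq.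
  have := H2 (e1, @Ordinal 4 2 isT) (e2, @Ordinal 4 3 isT).
  rewrite /same_ends /= -Hq Lu Pv Lv2 !eqxx /= => /(_ isT).
  exact: ord_neq.
Qed.

Lemma step_e e1 e2 u v w : top_labels lam p e1 u v -> top_labels lam p e2 v w ->
  u != v -> v != w -> u != w ->
  not_inverse (erim_piece lam ((u, v), e1)) (erim_piece lam ((v, w), e2)).
Proof.
move=> T1 T2 uv vw uw; rewrite /not_inverse /=.
case: (eqVneq e1 e2) => [E12|//] /=; subst e2.
case/orP: T1 => [/andP[/eqP Pu /eqP Lv] | /andP[/eqP Lu /eqP Pv]];
case/orP: T2 => [/andP[/eqP Pv2 /eqP Lw] | /andP[/eqP Lv2 /eqP Pw]].
- by move: uv; rewrite -Pu -Pv2 eqxx.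
- by move: uw; rewrite -Pu -Pw eqxx.
- by move: uw; rewrite -Lu -Lw eqxx.
- by move: uv; rewrite -Lu -Lv2 eqxx.
Qed.

End S.

Theorem mainTheorem2 (V E : finType) (lam p q : E -> V) :
  link_girth_ge4 lam p q ->
  is_tree (Lplus_adj lam p q) ->
  is_tree (Lminus_adj lam p q) ->
  forall a b : V, a != b ->
  forall (vs : seq V) (es : seq E),
    is_fan_data lam p q a b vs es ->
    freely_reduced (vrim lam q a vs es) /\ freely_reduced (erim lam a vs es).
Proof.
move=> [H1 H2 _] _ _ a b _ vs es [_ U _ S A].
have Hlq e : lam e != q e.
  by have := H1 (e, @Ordinal 4 1 isT); rewrite /= xpair_eqE andbT.
elim: vs a es U S A => [|v vs IH] a [|e es] //= U [S] /andP[T A].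
have {}IH := IH v es (proj2 (andP U)) S A.
case: vs es U S A IH => [|w vs] [|e' es] //= U S A IH.
  split=> //; rewrite vrim_cons /= andbT /vfirst /vsecond /not_inverse /=; case: ifP => _ /=;
  by rewrite ?orbF // eq_sym.
case/andP: A => T2 A.
move: U; rewrite !inE !negb_or => /andP[/andP[av /andP[aw _]] /andP[/andP[vw _] _]].
have Hfirst : not_inverse (vfirst lam q ((a, v), e)) (vsecond lam q ((a, v), e)).
  rewrite /vfirst /vsecond; case: ifP => _; rewrite /not_inverse /= ?orbF ?Hlq //.
  by rewrite eq_sym Hlq.
case: IH => IHv IHe; split.
- move: IHv; rewrite !vrim_cons /= => ->; rewrite Hfirst /=.
  by rewrite (step_v H2 T T2 av vw aw).
- by rewrite IHe (step_e T T2 av vw aw).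
Qed.
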